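(* Let $u$ be a smooth solution of the equivariant Skyrme equation in $\Omega$ with $u(t,0)=0$. Then \[ \lim_{T\to0^+}\frac1T\int_0^T\!\!\int_0^t e(t,r)\,r\,dr\,dt=\lim_{T\to0^+}E(T). \]
   Context: Fix $\alpha>0$, $T_0>0$. The equivariant Skyrme equation is \[ w(u_{tt}-u_{rr}) - \Big(1-\tfrac{\alpha^2\sin^2u}{r^2}\Big)\tfrac{u_r}{r} + \tfrac{\sin 2u}{2r^2}\big[\alpha^2(u_t^2-u_r^2)+1\big]=0,\qquad w:=1+\tfrac{\alpha^2\sin^2u}{r^2}. \] $\Omega=\{(t,r):0<t\le T_0,\ 0\le r\le t\}$; a smooth solution in $\Omega$ is a smooth function on $\Omega$ satisfying the equation for $r>0$. Energy density $e:=w\frac{u_t^2+u_r^2}{2}+\frac{\sin^2u}{2r^2}$; energy $E(T):=\int_0^T e(T,r)\,r\,dr$ (the limit $\lim_{T\to0^+}E(T)$ exists and is finite). *)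

(* Defs.v *)
From Stdlib Require Import Reals Lra.
Open Scope R_scope.

Definition Omega (T0 t r : R) : Prop := 0 < t <= T0 /\ 0 <= r <= t.

Definition open2 (U : R -> R -> Prop) : Prop :=
  forall t r, U t r -> exists d, 0 < d /\
    forall t' r', Rabs (t' - t) < d -> Rabs (r' - r) < d -> U t' r'.

Definition cont2_on (U : R -> R -> Prop) (f : R -> R -> R) : Prop :=
  forall t r, U t r -> forall eps, 0 < eps -> exists d, 0 < d /\
    forall t' r', Rabs (t' - t) < d -> Rabs (r' - r) < d ->
      Rabs (f t' r' - f t r) < eps.

Fixpoint Ck_on (U : R -> R -> Prop) (k : nat) (f : R -> R -> R) : Prop :=
  match k with
  | O => cont2_on U f
  | S k' => cont2_on U f /\
      exists ft fr : R -> R -> R,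
        (forall t r, U t r ->
            derivable_pt_lim (fun s => f s r) t (ft t r) /\
            derivable_pt_lim (fun s => f t s) r (fr t r)) /\
        Ck_on U k' ft /\ Ck_on U k' fr
  end.

Definition smooth_on (U : R -> R -> Prop) (f : R -> R -> R) : Prop :=
  forall k, Ck_on U k f.

Definition wS (alpha ux r : R) : R := 1 + alpha ^ 2 * (sin ux) ^ 2 / r ^ 2.

Definition skyrme_eq (alpha r ux ut ur utt urr : R) : Prop :=
  wS alpha ux r * (utt - urr)
  - (1 - alpha ^ 2 * (sin ux) ^ 2 / r ^ 2) * (ur / r)
  + sin (2 * ux) / (2 * r ^ 2) * (alpha ^ 2 * (ut ^ 2 - ur ^ 2) + 1) = 0.

Definition edens (alpha ux ut ur r : R) : R :=
  wS alpha ux r * ((ut ^ 2 + ur ^ 2) / 2) + (sin ux) ^ 2 / (2 * r ^ 2).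

Definition is_RInt (f : R -> R) (a b v : R) : Prop :=
  exists pr : Riemann_integrable f a b, RiemannInt pr = v.

Definition lim_right0 (T0 : R) (f : R -> R) (L : R) : Prop :=
  forall eps, 0 < eps -> exists d, 0 < d /\
    forall T, 0 < T -> T < d -> T <= T0 -> Rabs (f T - L) < eps.

(* Main.v *)
Require Import Defs.
From Stdlib Require Import Reals Lra Classical ClassicalEpsilon.
From Coquelicot Require Import Coquelicot.
Import Defs.
Open Scope R_scope.

Definition gfun alpha ux p q r := edens alpha ux p q r * r.
Definition dg alpha ux p q r a b c :=
  r * ((alpha^2 * sin ux * cos ux * (p^2+q^2) / r^2 + sin ux * cos ux / r^2) * a
       + wS alpha ux r * (p * b + q * c)).
Definition Ff alpha ux p q r := r * wS alpha ux r * p * q.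
Definition dF alpha ux p q r a b c :=
  wS alpha ux r * p * q
  + r * (alpha^2 * (2 * sin ux * cos ux * a / r^2 - 2 * (sin ux)^2 / r^3)) * p * q
  + r * wS alpha ux r * b * q + r * wS alpha ux r * p * c.

Lemma is_derive_g alpha (U P Q : R -> R) (r t a b c : R) : r <> 0 ->
  is_derive U t a -> is_derive P t b -> is_derive Q t c ->
  is_derive (fun z => gfun alpha (U z) (P z) (Q z) r) t (dg alpha (U t) (P t) (Q t) r a b c).
Proof.
intros Hr HU HP HQ. unfold gfun, edens, wS.
auto_derive.
- repeat split; eexists; eassumption.
- replace (Derive (fun x => U x) t) with a by (symmetry; apply is_derive_unique; exact HU).
  replace (Derive (fun x => P x) t) with b by (symmetry; apply is_derive_unique; exact HP).
  replace (Derive (fun x => Q x) t) with c by (symmetry; apply is_derive_unique; exact HQ).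
  unfold dg, wS. field. auto.
Qed.

Lemma is_derive_F alpha (U P Q : R -> R) (r a b c : R) : r <> 0 ->
  is_derive U r a -> is_derive P r b -> is_derive Q r c ->
  is_derive (fun z => Ff alpha (U z) (P z) (Q z) z) r (dF alpha (U r) (P r) (Q r) r a b c).
Proof.
intros Hr HU HP HQ. unfold Ff, wS.
auto_derive.
- repeat split; try (eexists; eassumption). auto.
- replace (Derive (fun x => U x) r) with a by (symmetry; apply is_derive_unique; exact HU).
  replace (Derive (fun x => P x) r) with b by (symmetry; apply is_derive_unique; exact HP).
  replace (Derive (fun x => Q x) r) with c by (symmetry; apply is_derive_unique; exact HQ).
  unfold dF, wS. field. auto.
Qed.

Lemma ident alpha ux p q r e m f : r <> 0 ->
  skyrme_eq alpha r ux p q e f ->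
  dg alpha ux p q r p e m = dF alpha ux p q r q m f.
Proof.
intros Hr Heq. unfold skyrme_eq in Heq. rewrite sin_2a in Heq.
set (W := wS alpha ux r) in *.
set (RHS := (1 - alpha ^ 2 * (sin ux) ^ 2 / r ^ 2) * (q / r)
   - 2 * sin ux * cos ux / (2 * r ^ 2) * (alpha ^ 2 * (p ^ 2 - q ^ 2) + 1)).
assert (He : W * (e - f) = RHS) by (unfold RHS; lra).
set (K := r * (alpha^2 * sin ux * cos ux * (p^2+q^2) / r^2 + sin ux * cos ux / r^2) * p
   - W * p * q - r * (alpha^2 * (2 * sin ux * cos ux * q / r^2 - 2 * (sin ux)^2 / r^3)) * p * q).
assert (H1 : dg alpha ux p q r p e m - dF alpha ux p q r q m f = r * p * (W * (e - f)) + K).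
{ unfold dg, dF, K. fold W. ring. }
rewrite He in H1.
assert (H2 : r * p * RHS + K = 0).
{ unfold RHS, K, W, wS. field. auto. }
lra.
Qed.

Lemma sin_sq_le x : (sin x)^2 <= x^2.
Proof.
assert (Hp : forall y, 0 < y -> (sin y)^2 <= y^2).
{ intros y Hy. pose proof (sin_lt_x y Hy). pose proof (SIN_bound y).
  destruct (Rle_lt_dec 1 y).
  - nra.
  - assert (0 <= sin y). { apply sin_ge_0; try lra. pose proof PI2_1. lra. } nra. }
destruct (Rtotal_order x 0) as [H|[H|H]].
- replace x with (- (-x)) by ring. rewrite sin_neg.
  specialize (Hp (-x)). nra.
- subst. rewrite sin_0. lra.
- auto.
Qed.

Lemma inv_r2_pos r : r <> 0 -> 0 < / r ^ 2.
Proof. intros. apply Rinv_0_lt_compat. apply pow2_gt_0. auto. Qed.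

Lemma W_ge1 alpha ux r : r <> 0 -> 1 <= wS alpha ux r.
Proof.
intros Hr. unfold wS. assert (0 <= alpha ^ 2 * sin ux ^ 2 / r ^ 2).
{ unfold Rdiv. apply Rmult_le_pos. apply Rmult_le_pos; apply pow2_ge_0.
  apply Rlt_le, inv_r2_pos; auto. } lra.
Qed.

Definition Cst alpha K := (1 + alpha^2 * K^2) * K^2 + K^2 / 2.

Lemma s2r2_le ux r K : r <> 0 -> 0 <= K -> Rabs ux <= K * Rabs r ->
  (sin ux)^2 / r^2 <= K^2.
Proof.
intros Hr HK Hu.
assert (Hs : (sin ux)^2 <= K^2 * r^2).
{ pose proof (sin_sq_le ux).
  assert (ux^2 <= (K * Rabs r)^2).
  { rewrite <- (pow2_abs ux). pose proof (Rabs_pos ux). nra. }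
  rewrite Rpow_mult_distr, pow2_abs in H0. lra. }
pose proof (inv_r2_pos r Hr).
apply (Rmult_le_reg_r (r^2)). apply pow2_gt_0; auto.
unfold Rdiv. rewrite Rmult_assoc, Rinv_l. lra. apply pow_nonzero; auto.
Qed.

Lemma edens_nonneg alpha ux p q r : r <> 0 -> 0 <= edens alpha ux p q r.
Proof.
intros Hr. unfold edens. pose proof (W_ge1 alpha ux r Hr).
assert (0 <= sin ux ^ 2 / (2 * r ^ 2)).
{ unfold Rdiv. apply Rmult_le_pos. apply pow2_ge_0. apply Rlt_le, Rinv_0_lt_compat.
  pose proof (pow2_gt_0 r Hr). lra. }
assert (0 <= (p^2+q^2)/2) by (pose proof (pow2_ge_0 p); pose proof (pow2_ge_0 q); lra).
nra.
Qed.

Lemma bound_pt alpha K ux p q r : r <> 0 -> 0 <= K -> Rabs ux <= K * Rabs r ->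
  Rabs p <= K -> Rabs q <= K ->
  Rabs (gfun alpha ux p q r) <= Cst alpha K * Rabs r /\
  Rabs (Ff alpha ux p q r) <= Cst alpha K * Rabs r.
Proof.
intros Hr HK Hu Hp Hq.
pose proof (s2r2_le ux r K Hr HK Hu) as Hs.
pose proof (W_ge1 alpha ux r Hr) as HW1.
assert (HW : wS alpha ux r <= 1 + alpha^2 * K^2).
{ unfold wS. unfold Rdiv in *. rewrite Rmult_assoc. pose proof (pow2_ge_0 alpha).
  assert (alpha ^ 2 * (sin ux ^ 2 * / r ^ 2) <= alpha^2 * K^2) by (apply Rmult_le_compat_l; lra).
  lra. }
assert (Hp2 : p^2 <= K^2) by (rewrite <- (pow2_abs p); pose proof (Rabs_pos p); nra).
assert (Hq2 : q^2 <= K^2) by (rewrite <- (pow2_abs q); pose proof (Rabs_pos q); nra).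
assert (Hpq : Rabs p * Rabs q <= K^2) by (pose proof (Rabs_pos p); pose proof (Rabs_pos q); nra).
assert (HC : (1 + alpha^2*K^2) * K^2 <= Cst alpha K) by (unfold Cst; pose proof (pow2_ge_0 K); lra).
split.
- unfold gfun. rewrite Rabs_mult. apply Rmult_le_compat_r. apply Rabs_pos.
  rewrite Rabs_pos_eq by (apply edens_nonneg; auto).
  unfold edens, Cst.
  assert (sin ux ^ 2 / (2 * r ^ 2) = (sin ux ^ 2 / r ^ 2) / 2) by (field; auto).
  rewrite H.
  assert (wS alpha ux r * ((p ^ 2 + q ^ 2) / 2) <= (1 + alpha ^ 2 * K ^ 2) * K^2).
  { apply Rmult_le_compat; try lra. pose proof (pow2_ge_0 p); pose proof (pow2_ge_0 q); lra. }
  lra.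
- unfold Ff. rewrite !Rabs_mult. rewrite (Rabs_pos_eq (wS _ _ _)) by lra.
  pose proof (Rabs_pos r). pose proof (Rabs_pos p). pose proof (Rabs_pos q).
  assert (wS alpha ux r * (Rabs p * Rabs q) <= Cst alpha K).
  { apply Rle_trans with ((1 + alpha^2*K^2) * K^2); auto. apply Rmult_le_compat; nra. }
  nra.
Qed.

Lemma flux_nonneg alpha ux p q r : 0 < r ->
  0 <= gfun alpha ux p q r + Ff alpha ux p q r.
Proof.
intros Hr. unfold gfun, Ff, edens.
pose proof (W_ge1 alpha ux r (Rgt_not_eq _ _ Hr)).
assert (0 <= sin ux ^ 2 / (2 * r ^ 2)).
{ unfold Rdiv. apply Rmult_le_pos. apply pow2_ge_0. apply Rlt_le, Rinv_0_lt_compat.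
  pose proof (pow2_gt_0 r (Rgt_not_eq _ _ Hr)). lra. }
assert (E : (wS alpha ux r * ((p ^ 2 + q ^ 2) / 2) + sin ux ^ 2 / (2 * r ^ 2)) * r +
  r * wS alpha ux r * p * q = r * (wS alpha ux r * ((p+q)^2/2) + sin ux ^ 2 / (2 * r ^ 2))) by (field; lra).
rewrite E. apply Rmult_le_pos. lra. apply Rplus_le_le_0_compat; auto.
apply Rmult_le_pos. lra. pose proof (pow2_ge_0 (p+q)). lra.
Qed.

Lemma loc_of (x : R) (P : R -> Prop) :
  (exists d, 0 < d /\ forall y, Rabs (y - x) < d -> P y) -> locally x P.
Proof.
intros [d [Hd H]]. exists (mkposreal d Hd). intros y Hy. apply H. exact Hy.
Qed.

Lemma loc_to (x : R) (P : R -> Prop) :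
  locally x P -> exists d, 0 < d /\ forall y, Rabs (y - x) < d -> P y.
Proof.
intros [d H]. exists d. split. apply cond_pos. intros y Hy. apply H. exact Hy.
Qed.

Lemma loc2_of (x y : R) (P : R -> R -> Prop) :
  (exists d, 0 < d /\ forall u v, Rabs (u - x) < d -> Rabs (v - y) < d -> P u v) ->
  locally_2d P x y.
Proof.
intros [d [Hd H]]. exists (mkposreal d Hd). intros u v Hu Hv. apply H; auto.
Qed.

Lemma loc2_to (x y : R) (P : R -> R -> Prop) :
  locally_2d P x y ->
  exists d, 0 < d /\ forall u v, Rabs (u - x) < d -> Rabs (v - y) < d -> P u v.
Proof.
intros [d H]. exists d. split. apply cond_pos. intros u v Hu Hv. apply H; auto.
Qed.

Lemma loc2_weaken (x y : R) (P Q : R -> R -> Prop) :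
  (forall u v, P u v -> Q u v) -> locally_2d P x y -> locally_2d Q x y.
Proof.
intros H HP. apply loc2_to in HP. destruct HP as [d [Hd HP]]. apply loc2_of. exists d. split; auto.
Qed.

Lemma loc2_and (x y : R) (P Q : R -> R -> Prop) :
  locally_2d P x y -> locally_2d Q x y -> locally_2d (fun u v => P u v /\ Q u v) x y.
Proof.
intros HP HQ. apply loc2_to in HP. apply loc2_to in HQ.
destruct HP as [d1 [Hd1 HP]]. destruct HQ as [d2 [Hd2 HQ]].
apply loc2_of. exists (Rmin d1 d2). split. apply Rmin_pos; auto.
intros u v Hu Hv. pose proof (Rmin_l d1 d2). pose proof (Rmin_r d1 d2).
split; [apply HP|apply HQ]; lra.
Qed.

Lemma loc2_loc2 (x y : R) (P : R -> R -> Prop) :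
  locally_2d P x y -> locally_2d (fun u v => locally_2d P u v) x y.
Proof.
intros HP. apply loc2_to in HP. destruct HP as [d [Hd HP]].
apply loc2_of. exists (d/2). split. lra. intros u v Hu Hv.
apply loc2_of. exists (d/2). split. lra. intros a b Ha Hb.
apply HP. apply Rle_lt_trans with (Rabs (a - u) + Rabs (u - x)).
replace (a - x) with ((a - u) + (u - x)) by ring. apply Rabs_triang. lra.
apply Rle_lt_trans with (Rabs (b - v) + Rabs (v - y)).
replace (b - y) with ((b - v) + (v - y)) by ring. apply Rabs_triang. lra.
Qed.

Lemma open2_loc (U : R -> R -> Prop) x y : open2 U -> U x y -> locally_2d U x y.
Proof.
intros HU Hxy. apply loc2_of. destruct (HU x y Hxy) as [d [Hd H]]. exists d. split; auto.
Qed.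

Lemma loc2_neq0 x y : y <> 0 -> locally_2d (fun u v => v <> 0) x y.
Proof.
intros Hy. apply loc2_of. exists (Rabs y). split. apply Rabs_pos_lt; auto.
intros u v Hu Hv Hv0. subst. rewrite Rminus_0_l, Rabs_Ropp in Hv. lra.
Qed.

Lemma loc2_sec1 x y (P : R -> R -> Prop) :
  locally_2d P x y -> locally x (fun u => P u y).
Proof.
intros HP. apply loc2_to in HP. destruct HP as [d [Hd HP]]. apply loc_of. exists d. split; auto.
intros u Hu. apply HP; auto. rewrite Rminus_diag, Rabs_R0. auto.
Qed.

Lemma loc2_sec2 x y (P : R -> R -> Prop) :
  locally_2d P x y -> locally y (fun v => P x v).
Proof.
intros HP. apply loc2_to in HP. destruct HP as [d [Hd HP]]. apply loc_of. exists d. split; auto.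
intros v Hv. apply HP; auto. rewrite Rminus_diag, Rabs_R0. auto.
Qed.

Lemma cont2_pt (U : R -> R -> Prop) f x y : cont2_on U f -> U x y -> continuity_2d_pt f x y.
Proof.
intros Hc Hxy eps. destruct (Hc x y Hxy eps (cond_pos eps)) as [d [Hd H]].
apply loc2_of. exists d. split; auto.
Qed.

Lemma cont2_sec2_c f x y : continuity_2d_pt f x y -> continuity_pt (fun v => f x v) y.
Proof.
intros Hc. apply continuity_pt_locally. intros eps.
specialize (Hc eps). apply loc2_sec2 in Hc. exact Hc.
Qed.

Lemma cont2_sec1_c f x y : continuity_2d_pt f x y -> continuity_pt (fun u => f u y) x.
Proof.
intros Hc. apply continuity_pt_locally. intros eps.
specialize (Hc eps). apply loc2_sec1 in Hc. exact Hc.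
Qed.

Lemma cont2_ext_U (U : R -> R -> Prop) f g x y : open2 U -> U x y ->
  (forall a b, U a b -> f a b = g a b) -> continuity_2d_pt f x y -> continuity_2d_pt g x y.
Proof.
intros HU Hxy Heq Hc. apply continuity_2d_pt_ext_loc with f; auto.
apply (loc2_weaken _ _ U). auto. apply open2_loc; auto.
Qed.

Lemma der1_ext_U (U : R -> R -> Prop) (f g : R -> R -> R) (t r l : R) : open2 U -> U t r ->
  (forall a b, U a b -> f a b = g a b) ->
  is_derive (fun z => f z r) t l -> is_derive (fun z => g z r) t l.
Proof.
intros HU Ht Heq Hd. apply is_derive_ext_loc with (fun z => f z r); auto.
apply loc2_sec1 with (P := fun a b => f a b = g a b).
apply (loc2_weaken _ _ U); auto. apply open2_loc; auto.
Qed.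

Lemma der2_ext_U (U : R -> R -> Prop) (f g : R -> R -> R) (t r l : R) : open2 U -> U t r ->
  (forall a b, U a b -> f a b = g a b) ->
  is_derive (fun z => f t z) r l -> is_derive (fun z => g t z) r l.
Proof.
intros HU Ht Heq Hd. apply is_derive_ext_loc with (fun z => f t z); auto.
apply loc2_sec2 with (P := fun a b => f a b = g a b).
apply (loc2_weaken _ _ U); auto. apply open2_loc; auto.
Qed.

Lemma regularity (U : R -> R -> Prop) (u ut ur utt urr : R -> R -> R)
  (HUopen : open2 U)
  (Hsmooth : smooth_on U u)
  (Hut : forall t r, U t r -> derivable_pt_lim (fun s => u s r) t (ut t r))
  (Hur : forall t r, U t r -> derivable_pt_lim (fun s => u t s) r (ur t r))
  (Hutt : forall t r, U t r -> derivable_pt_lim (fun s => ut s r) t (utt t r))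
  (Hurr : forall t r, U t r -> derivable_pt_lim (fun s => ur t s) r (urr t r)) :
  exists urt utr : R -> R -> R, forall t r, U t r ->
   continuity_2d_pt u t r /\ continuity_2d_pt ut t r /\ continuity_2d_pt ur t r /\
   continuity_2d_pt utt t r /\ continuity_2d_pt urr t r /\ continuity_2d_pt urt t r /\
   is_derive (fun z => ur z r) t (urt t r) /\ is_derive (fun z => ut t z) r (utr t r) /\
   urt t r = utr t r.
Proof.
destruct (Hsmooth 2%nat) as [Hcu [ft [fr [Hd [Hft Hfr]]]]].
destruct Hft as [Hcft [ftt [ftr [Hdft [Hcftt Hcftr]]]]].
destruct Hfr as [Hcfr [frt [frr [Hdfr [Hcfrt Hcfrr]]]]].
simpl in Hcftt, Hcftr, Hcfrt, Hcfrr.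
assert (Et : forall a b, U a b -> ft a b = ut a b).
{ intros a b Hab. eapply uniqueness_limite. apply (proj1 (Hd a b Hab)). apply Hut; auto. }
assert (Er : forall a b, U a b -> fr a b = ur a b).
{ intros a b Hab. eapply uniqueness_limite. apply (proj2 (Hd a b Hab)). apply Hur; auto. }
assert (Dut : forall a b, U a b -> is_derive (fun z => ut z b) a (ftt a b)).
{ intros a b Hab. apply (der1_ext_U U ft); auto. apply is_derive_Reals. apply (proj1 (Hdft a b Hab)). }
assert (Dutr : forall a b, U a b -> is_derive (fun z => ut a z) b (ftr a b)).
{ intros a b Hab. apply (der2_ext_U U ft); auto. apply is_derive_Reals. apply (proj2 (Hdft a b Hab)). }
assert (Durt : forall a b, U a b -> is_derive (fun z => ur z b) a (frt a b)).
{ intros a b Hab. apply (der1_ext_U U fr); auto. apply is_derive_Reals. apply (proj1 (Hdfr a b Hab)). }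
assert (Durr : forall a b, U a b -> is_derive (fun z => ur a z) b (frr a b)).
{ intros a b Hab. apply (der2_ext_U U fr); auto. apply is_derive_Reals. apply (proj2 (Hdfr a b Hab)). }
assert (Ett : forall a b, U a b -> ftt a b = utt a b).
{ intros a b Hab. eapply uniqueness_limite. apply is_derive_Reals. apply Dut; auto. apply Hutt; auto. }
assert (Err : forall a b, U a b -> frr a b = urr a b).
{ intros a b Hab. eapply uniqueness_limite. apply is_derive_Reals. apply Durr; auto. apply Hurr; auto. }
assert (DR1 : forall a b, U a b -> Derive (fun z => Derive (fun s => u z s) b) a = frt a b).
{ intros a b Hab. apply is_derive_unique.
  apply is_derive_ext_loc with (fun z => ur z b). 2: apply Durt; auto.
  apply loc2_sec1 with (P := fun a b => ur a b = Derive (fun s => u a s) b).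
  apply (loc2_weaken _ _ U). 2: apply open2_loc; auto.
  intros x y Hxy. symmetry. apply is_derive_unique. apply is_derive_Reals. apply Hur; auto. }
assert (DR2 : forall a b, U a b -> Derive (fun z => Derive (fun s => u s z) a) b = ftr a b).
{ intros a b Hab. apply is_derive_unique.
  apply is_derive_ext_loc with (fun z => ut a z). 2: apply Dutr; auto.
  apply loc2_sec2 with (P := fun a b => ut a b = Derive (fun s => u s b) a).
  apply (loc2_weaken _ _ U). 2: apply open2_loc; auto.
  intros x y Hxy. symmetry. apply is_derive_unique. apply is_derive_Reals. apply Hut; auto. }
exists frt, ftr. intros t r Htr.
split. apply (cont2_pt U); auto.
split. apply (cont2_ext_U U ft); auto. apply (cont2_pt U); auto.
split. apply (cont2_ext_U U fr); auto. apply (cont2_pt U); auto.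
split. apply (cont2_ext_U U ftt); auto. apply (cont2_pt U); auto.
split. apply (cont2_ext_U U frr); auto. apply (cont2_pt U); auto.
split. apply (cont2_pt U); auto.
split. apply Durt; auto.
split. apply Dutr; auto.
rewrite <- DR1, <- DR2 by auto.
apply Schwarz.
- apply (loc2_weaken _ _ U). 2: apply open2_loc; auto.
  intros a b Hab. split; [|split; [|split]].
  + eexists. apply is_derive_Reals. apply Hut; auto.
  + eexists. apply is_derive_Reals. apply Hur; auto.
  + eexists. apply is_derive_ext_loc with (fun z => ur z b). 2: apply Durt; auto.
    apply loc2_sec1 with (P := fun a b => ur a b = Derive (fun s => u a s) b).
    apply (loc2_weaken _ _ U). 2: apply open2_loc; auto.
    intros x y Hxy. symmetry. apply is_derive_unique. apply is_derive_Reals. apply Hur; auto.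
  + eexists. apply is_derive_ext_loc with (fun z => ut a z). 2: apply Dutr; auto.
    apply loc2_sec2 with (P := fun a b => ut a b = Derive (fun s => u s b) a).
    apply (loc2_weaken _ _ U). 2: apply open2_loc; auto.
    intros x y Hxy. symmetry. apply is_derive_unique. apply is_derive_Reals. apply Hut; auto.
- apply (cont2_ext_U U frt); auto. intros a b Hab. symmetry. apply DR1; auto.
  apply (cont2_pt U); auto.
- apply (cont2_ext_U U ftr); auto. intros a b Hab. symmetry. apply DR2; auto.
  apply (cont2_pt U); auto.
Qed.

Lemma rect_bound (f : R -> R -> R) a b c d : a <= b -> c <= d ->
  (forall x y, a <= x <= b -> c <= y <= d -> continuity_2d_pt f x y) ->
  exists M, forall x y, a <= x <= b -> c <= y <= d -> Rabs (f x y) <= M.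
Proof.
intros Hab Hcd Hc.
destruct (uniform_continuity_2d f a b c d Hc (mkposreal 1 Rlt_0_1)) as [de Hde].
simpl in Hde. pose proof (cond_pos de) as Hdp.
assert (Claim : forall n : nat, forall x y, a <= x <= b -> c <= y <= d ->
  (x - a) + (y - c) <= INR n * (de / 2) -> Rabs (f x y) <= Rabs (f a c) + INR n).
{ induction n as [|n IH]; intros x y Hx Hy Hs.
  - simpl in Hs. assert (x = a) by lra. assert (y = c) by lra. subst. simpl. lra.
  - rewrite S_INR in Hs |- *.
    destruct (Rle_lt_dec (de/2) (x - a)) as [H1|H1].
    + assert (Hn : Rabs (f (x - de/2) y) <= Rabs (f a c) + INR n).
      { apply IH; lra. }
      assert (Hu : Rabs (f x y - f (x - de/2) y) < 1).
      { apply Hde; try lra. rewrite Rabs_pos_eq; lra. rewrite Rminus_diag, Rabs_R0. lra. }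
      pose proof (Rabs_triang_inv (f x y) (f (x - de/2) y)). lra.
    + set (y' := Rmax c (y - de/2)).
      assert (Hy1 : c <= y') by apply Rmax_l.
      assert (Hy2 : y' <= y) by (apply Rmax_lub; lra).
      assert (Hy3 : y' - c <= INR n * (de/2)).
      { unfold y'. apply Rmax_case_strong; intros; try lra.
        pose proof (pos_INR n). nra. }
      assert (Hn : Rabs (f a y') <= Rabs (f a c) + INR n).
      { apply IH; try lra. }
      assert (Hu : Rabs (f x y - f a y') < 1).
      { apply Hde; try lra. rewrite Rabs_pos_eq; lra. rewrite Rabs_pos_eq. 2: lra.
        unfold y'. apply Rmax_case_strong; intros; lra. }
      pose proof (Rabs_triang_inv (f x y) (f a y')). lra. }
destruct (INR_unbounded ((b - a + (d - c)) / (de / 2))) as [n Hn].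
exists (Rabs (f a c) + INR n). intros x y Hx Hy. apply Claim; auto.
apply Rle_trans with (b - a + (d - c)). lra.
apply Rlt_le. apply (Rmult_lt_reg_r (/ (de/2))). apply Rinv_0_lt_compat; lra.
rewrite Rmult_assoc, Rinv_r by lra. rewrite Rmult_1_r. exact Hn.
Qed.

Definition Good (U : R -> R -> Prop) (u ut ur utt urr urt utr : R -> R -> R) : Prop :=
  forall t r, U t r ->
   continuity_2d_pt u t r /\ continuity_2d_pt ut t r /\ continuity_2d_pt ur t r /\
   continuity_2d_pt utt t r /\ continuity_2d_pt urr t r /\ continuity_2d_pt urt t r /\
   continuity_2d_pt utr t r /\
   is_derive (fun z => u z r) t (ut t r) /\ is_derive (fun z => u t z) r (ur t r) /\
   is_derive (fun z => ut z r) t (utt t r) /\ is_derive (fun z => ur t z) r (urr t r) /\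
   is_derive (fun z => ur z r) t (urt t r) /\ is_derive (fun z => ut t z) r (utr t r) /\
   urt t r = utr t r.

Lemma c2_pow f x y n : continuity_2d_pt f x y -> continuity_2d_pt (fun a b => f a b ^ n) x y.
Proof.
intros H. induction n as [|n IH]; simpl.
- apply continuity_2d_pt_const.
- apply continuity_2d_pt_mult; auto.
Qed.

Ltac c2 :=
  repeat first
  [ apply continuity_2d_pt_const
  | apply continuity_2d_pt_id2
  | apply continuity_2d_pt_id1
  | assumption
  | apply continuity_2d_pt_plus
  | apply continuity_2d_pt_minus
  | apply continuity_2d_pt_mult
  | apply continuity_2d_pt_opp
  | apply c2_pow
  | apply (continuity_1d_2d_pt_comp sin); [apply continuity_sin|]
  | apply (continuity_1d_2d_pt_comp cos); [apply continuity_cos|]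
  | apply continuity_2d_pt_inv ].


Lemma good_of (U : R -> R -> Prop) (u ut ur utt urr : R -> R -> R)
  (HUopen : open2 U)
  (Hsmooth : smooth_on U u)
  (Hut : forall t r, U t r -> derivable_pt_lim (fun s => u s r) t (ut t r))
  (Hur : forall t r, U t r -> derivable_pt_lim (fun s => u t s) r (ur t r))
  (Hutt : forall t r, U t r -> derivable_pt_lim (fun s => ut s r) t (utt t r))
  (Hurr : forall t r, U t r -> derivable_pt_lim (fun s => ur t s) r (urr t r)) :
  exists urt utr, Good U u ut ur utt urr urt utr.
Proof.
destruct (regularity U u ut ur utt urr HUopen Hsmooth Hut Hur Hutt Hurr) as [urt [utr H]].
exists urt, utr. intros t r Htr.
destruct (H t r Htr) as (H1&H2&H3&H4&H5&H6&H7&H8&H9).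
assert (C7 : continuity_2d_pt utr t r).
{ apply (cont2_ext_U U urt); auto. intros a b Hab. apply (H a b Hab). }
refine (conj H1 (conj H2 (conj H3 (conj H4 (conj H5 (conj H6 (conj C7 (conj _ (conj _ (conj _ (conj _ (conj H7 (conj H8 H9))))))))))))).
all: apply is_derive_Reals; auto.
Qed.

Section S.
Variables (alpha : R) (U : R -> R -> Prop) (u ut ur utt urr urt utr : R -> R -> R).
Hypothesis HU : open2 U.
Hypothesis HG : Good U u ut ur utt urr urt utr.

Definition gg t r := gfun alpha (u t r) (ut t r) (ur t r) r.
Definition FF t r := Ff alpha (u t r) (ut t r) (ur t r) r.
Definition Gt t r := dg alpha (u t r) (ut t r) (ur t r) r (ut t r) (utt t r) (urt t r).
Definition Fr t r := dF alpha (u t r) (ut t r) (ur t r) r (ur t r) (utr t r) (urr t r).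

Lemma Dg t r : U t r -> r <> 0 -> is_derive (fun z => gg z r) t (Gt t r).
Proof.
intros Htr Hr. destruct (HG t r Htr) as (?&?&?&?&?&?&?&Hd1&Hd2&Hd3&Hd4&Hd5&Hd6&Heq).
unfold gg, Gt. apply (is_derive_g alpha (fun z => u z r) (fun z => ut z r) (fun z => ur z r)); auto.
Qed.

Lemma DF t r : U t r -> r <> 0 -> is_derive (fun z => FF t z) r (Fr t r).
Proof.
intros Htr Hr. destruct (HG t r Htr) as (?&?&?&?&?&?&?&Hd1&Hd2&Hd3&Hd4&Hd5&Hd6&Heq).
unfold FF, Fr. apply (is_derive_F alpha (fun z => u t z) (fun z => ut t z) (fun z => ur t z)); auto.
Qed.

Lemma Cg t r : U t r -> r <> 0 -> continuity_2d_pt gg t r.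
Proof.
intros Htr Hr. destruct (HG t r Htr) as (?&?&?&?&?&?&?&Hd1&Hd2&Hd3&Hd4&Hd5&Hd6&Heq).
unfold gg, gfun, edens, wS, Rdiv. c2.
all: try (apply pow_nonzero; auto).
apply Rmult_integral_contrapositive; split; [lra|apply pow_nonzero; auto].
Qed.

Lemma CGt t r : U t r -> r <> 0 -> continuity_2d_pt Gt t r.
Proof.
intros Htr Hr. destruct (HG t r Htr) as (?&?&?&?&?&?&?&Hd1&Hd2&Hd3&Hd4&Hd5&Hd6&Heq).
unfold Gt, dg, wS, Rdiv. c2.
all: try (apply pow_nonzero; auto).
Qed.

Lemma CFr t r : U t r -> r <> 0 -> continuity_2d_pt Fr t r.
Proof.
intros Htr Hr. destruct (HG t r Htr) as (?&?&?&?&?&?&?&Hd1&Hd2&Hd3&Hd4&Hd5&Hd6&Heq).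
unfold Fr, dF, wS, Rdiv. c2.
all: try (apply pow_nonzero; auto).
Qed.

Lemma locUnz t r : U t r -> r <> 0 -> locally_2d (fun a b => U a b /\ b <> 0) t r.
Proof.
intros. apply loc2_and. apply open2_loc; auto. apply loc2_neq0; auto.
Qed.

Lemma CDg t r : U t r -> r <> 0 ->
  continuity_2d_pt (fun a b => Derive (fun z => gg z b) a) t r.
Proof.
intros Htr Hr. apply continuity_2d_pt_ext_loc with Gt. 2: apply CGt; auto.
apply (loc2_weaken _ _ (fun a b => U a b /\ b <> 0)). 2: apply locUnz; auto.
intros a b [Hab Hb]. symmetry. apply is_derive_unique. apply Dg; auto.
Qed.

Lemma LCDg t r : U t r -> r <> 0 ->
  locally_2d (fun x y => continuity_2d_pt (fun a b => Derive (fun z => gg z b) a) x y) t r.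
Proof.
intros Htr Hr. apply (loc2_weaken _ _ (fun a b => U a b /\ b <> 0)). 2: apply locUnz; auto.
intros a b [Hab Hb]. apply CDg; auto.
Qed.

Lemma cont_pt_c (f : R -> R) x : continuity_pt f x -> continuous f x.
Proof. intros H. apply continuity_pt_filterlim. auto. Qed.

Lemma Cg_r t r : U t r -> r <> 0 -> continuity_pt (fun v => gg t v) r.
Proof. intros. apply cont2_sec2_c. apply Cg; auto. Qed.

Lemma ident_U T0 t r : (forall t r, Omega T0 t r -> 0 < r ->
           skyrme_eq alpha r (u t r) (ut t r) (ur t r) (utt t r) (urr t r)) ->
  (forall t r, Omega T0 t r -> U t r) ->
  Omega T0 t r -> 0 < r -> Gt t r = Fr t r.
Proof.
intros Heq HO Ho Hr. unfold Gt, Fr.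
destruct (HG t r (HO t r Ho)) as (?&?&?&?&?&?&?&Hd1&Hd2&Hd3&Hd4&Hd5&Hd6&He).
rewrite He. apply ident. lra. apply Heq; auto.
Qed.

End S.

Lemma tube (U : R -> R -> Prop) x a b : open2 U ->
  (forall r, a <= r <= b -> U x r) ->
  exists eta, 0 < eta /\ forall y r, Rabs (y - x) < eta -> a <= r <= b -> U y r.
Proof.
intros HU Hs.
assert (Hd : forall r, {d : posreal | a <= r <= b -> forall y s, Rabs (y - x) < d -> Rabs (s - r) < d -> U y s}).
{ intro r. apply constructive_indefinite_description. destruct (classic (a<=r<=b)) as [h|h].
  - destruct (HU x r (Hs r h)) as [d [Hd H']]. exists (mkposreal d Hd). intros _. auto.
  - exists (mkposreal 1 Rlt_0_1). intros; contradiction. }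
destruct (compactness_value_1d a b (fun r => proj1_sig (Hd r))) as [d Hd'].
exists d. split. apply cond_pos. intros y r Hy Hr. apply NNPP. intro Hn.
apply (Hd' r Hr). intros [t [Ht [H1 H2]]]. apply Hn.
apply (proj2_sig (Hd t) Ht). lra. exact H1.
Qed.

Lemma lip1 (h dh : R -> R) r K :
  (forall s, Rmin 0 r <= s <= Rmax 0 r -> is_derive h s (dh s) /\ Rabs (dh s) <= K) ->
  h 0 = 0 -> Rabs (h r) <= K * Rabs r.
Proof.
intros Hd H0.
destruct (MVT_gen h 0 r dh) as [c [Hc He]].
- intros x Hx. apply Hd. lra.
- intros x Hx. apply derivable_continuous_pt. exists (dh x).
  apply is_derive_Reals. apply (proj1 (Hd x Hx)).
- rewrite H0, Rminus_0_r, Rminus_0_r in He. rewrite He, Rabs_mult.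
  apply Rmult_le_compat_r. apply Rabs_pos. apply (proj2 (Hd c Hc)).
Qed.

Section S2.
Variables (alpha : R) (U : R -> R -> Prop) (u ut ur utt urr urt utr : R -> R -> R).
Hypothesis HU : open2 U.
Hypothesis HG : Good U u ut ur utt urr urt utr.

Lemma gF_bound t v K :
  (forall s, Rmin 0 v <= s <= Rmax 0 v -> U t s /\ Rabs (ur t s) <= K) ->
  Rabs (ut t v) <= K -> u t 0 = 0 -> v <> 0 -> 0 <= K ->
  Rabs (gg alpha u ut ur t v) <= Cst alpha K * Rabs v /\
  Rabs (FF alpha u ut ur t v) <= Cst alpha K * Rabs v.
Proof.
intros Hs Hut Hu0 Hv HK.
assert (Hu : Rabs (u t v) <= K * Rabs v).
{ apply (lip1 (fun z => u t z) (fun z => ur t z)); auto.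
  intros s Hs'. destruct (Hs s Hs') as [Hts Hb]. split; auto.
  apply (HG t s Hts). }
assert (Hr : Rabs (ur t v) <= K).
{ apply (Hs v). split; [apply Rmin_r | apply Rmax_r]. }
apply bound_pt; auto.
Qed.

Lemma cont_g0 t : U t 0 -> u t 0 = 0 -> continuity_pt (fun v => gg alpha u ut ur t v) 0.
Proof.
intros Ht0 Hu0.
destruct (HU t 0 Ht0) as [r0 [Hr0 Hbox]].
destruct (HG t 0 Ht0) as (_&Cut&Cur&_).
pose proof (cont2_sec2_c _ _ _ Cur) as Cur1. pose proof (cont2_sec2_c _ _ _ Cut) as Cut1.
destruct (loc_to _ _ (proj1 (continuity_pt_locally _ _) Cur1 (mkposreal 1 Rlt_0_1))) as [r1 [Hr1 H1]].
destruct (loc_to _ _ (proj1 (continuity_pt_locally _ _) Cut1 (mkposreal 1 Rlt_0_1))) as [r2 [Hr2 H2]].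
simpl in H1, H2.
set (K := Rabs (ur t 0) + Rabs (ut t 0) + 1).
assert (HK : 0 <= K) by (unfold K; pose proof (Rabs_pos (ur t 0)); pose proof (Rabs_pos (ut t 0)); lra).
set (rho := Rmin r0 (Rmin r1 r2)).
assert (Hrho : 0 < rho) by (unfold rho; repeat apply Rmin_pos; auto).
assert (Hr01 : rho <= r0) by (unfold rho; apply Rmin_l).
assert (Hr11 : rho <= r1) by (unfold rho; eapply Rle_trans; [apply Rmin_r|apply Rmin_l]).
assert (Hr21 : rho <= r2) by (unfold rho; eapply Rle_trans; [apply Rmin_r|apply Rmin_r]).
assert (Hb : forall v, Rabs v < rho -> v <> 0 -> Rabs (gg alpha u ut ur t v) <= Cst alpha K * Rabs v).
{ intros v Hv Hv0. apply gF_bound; auto.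
  - intros s Hs. assert (Hs' : Rabs s <= Rabs v).
    { unfold Rmin, Rmax in Hs. destruct (Rle_dec 0 v); unfold Rabs; repeat destruct Rcase_abs; lra. }
    split.
    + apply Hbox. rewrite Rminus_diag, Rabs_R0. auto. rewrite Rminus_0_r. lra.
    + assert (Rabs (ur t s - ur t 0) < 1) by (apply H1; rewrite Rminus_0_r; lra).
      pose proof (Rabs_triang_inv (ur t s) (ur t 0)). pose proof (Rabs_pos (ut t 0)). unfold K. lra.
  - assert (Rabs (ut t v - ut t 0) < 1) by (apply H2; rewrite Rminus_0_r; lra).
    pose proof (Rabs_triang_inv (ut t v) (ut t 0)). pose proof (Rabs_pos (ur t 0)). unfold K. lra. }
assert (HC : 0 <= Cst alpha K) by (unfold Cst; pose proof (pow2_ge_0 K); pose proof (pow2_ge_0 alpha); pose proof (pow2_ge_0 (alpha*K)); nra).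
apply continuity_pt_locally. intros eps. apply loc_of.
exists (Rmin rho (eps / (Cst alpha K + 1))). split.
{ apply Rmin_pos; auto. apply Rdiv_lt_0_compat. apply cond_pos. lra. }
intros v Hv. rewrite Rminus_0_r in Hv.
assert (Hg0 : gg alpha u ut ur t 0 = 0) by (unfold gg, gfun; ring).
rewrite Hg0, Rminus_0_r.
destruct (Req_dec v 0) as [->|Hv0].
{ rewrite Hg0, Rabs_R0. apply cond_pos. }
pose proof (Rmin_l rho (eps / (Cst alpha K + 1))). pose proof (Rmin_r rho (eps / (Cst alpha K + 1))).
eapply Rle_lt_trans. apply Hb; auto. lra.
assert (Rabs v < eps / (Cst alpha K + 1)) by lra.
pose proof (cond_pos eps).
apply Rle_lt_trans with (Cst alpha K * (eps / (Cst alpha K + 1))).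
apply Rmult_le_compat_l; lra.
assert (Hq : Cst alpha K * (eps / (Cst alpha K + 1)) = eps - eps / (Cst alpha K + 1)) by (field; lra).
assert (0 < eps / (Cst alpha K + 1)) by (apply Rdiv_lt_0_compat; lra). lra.
Qed.

Lemma int_g T T0 : 0 < T <= T0 -> (forall t r, Omega T0 t r -> U t r) -> u T 0 = 0 ->
  ex_RInt (fun v => gg alpha u ut ur T v) 0 T.
Proof.
intros HT HO Hu0. apply (ex_RInt_continuous (V:=R_CompleteNormedModule)). intros z Hz.
rewrite Rmin_left, Rmax_right in Hz by lra.
apply cont_pt_c.
destruct (Req_dec z 0) as [->|Hz0].
- apply cont_g0; auto. apply HO. unfold Omega; lra.
- apply (Cg_r alpha U u ut ur utt urr urt utr); auto. apply HO. unfold Omega; lra.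
Qed.

End S2.

Section S3.
Variables (alpha T0 : R) (U : R -> R -> Prop) (u ut ur utt urr urt utr : R -> R -> R).
Hypothesis HU : open2 U.
Hypothesis HG : Good U u ut ur utt urr urt utr.
Hypothesis HO : forall t r, Omega T0 t r -> U t r.
Hypothesis Heq : forall t r, Omega T0 t r -> 0 < r ->
           skyrme_eq alpha r (u t r) (ut t r) (ur t r) (utt t r) (urr t r).

Let g := gg alpha u ut ur.
Let FFx := FF alpha u ut ur.

Lemma deriv_Ed (de x : R) : 0 < de < x -> x <= T0 ->
  is_derive (fun z => RInt (fun v => g z v) de z) x (g x x + FFx x x - FFx x de).
Proof.
intros Hde HxT.
assert (Uxx : U x x) by (apply HO; unfold Omega; lra).
destruct (HU x x Uxx) as [r0 [Hr0 Hbox]].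
set (rho := Rmin (r0/2) (x - de)).
assert (Hrho : 0 < rho) by (unfold rho; apply Rmin_pos; lra).
assert (Hrho1 : rho <= r0/2) by apply Rmin_l.
assert (Hrho2 : rho <= x - de) by apply Rmin_r.
assert (Hseg : forall r, de/2 <= r <= x + rho -> U x r).
{ intros r Hr. destruct (Rle_dec r x).
  - apply HO. unfold Omega. lra.
  - apply Hbox. rewrite Rminus_diag, Rabs_R0. auto. rewrite Rabs_pos_eq; lra. }
destruct (tube U x (de/2) (x+rho) HU Hseg) as [eta [Heta Htube]].
assert (Hreg : forall y v, Rabs (y - x) < eta -> de/2 <= v <= x + rho -> U y v /\ v <> 0).
{ intros y v Hy Hv. split. apply Htube; auto. lra. }
assert (exR : forall y a b, Rabs (y - x) < eta -> de/2 <= a -> a <= b -> b <= x + rho ->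
   ex_RInt (fun v => g y v) a b).
{ intros y a b Hy Ha Hab Hb. apply (ex_RInt_continuous (V:=R_CompleteNormedModule)).
  intros z Hz. rewrite Rmin_left, Rmax_right in Hz by lra.
  apply cont_pt_c. destruct (Hreg y z Hy) as [Hyz Hz0]. lra.
  apply (Cg_r alpha U u ut ur utt urr urt utr); auto. }
set (e0 := Rmin (de/4) (rho/2)).
assert (He0 : 0 < e0) by (unfold e0; apply Rmin_pos; lra).
assert (He01 : e0 <= de/4) by apply Rmin_l.
assert (He02 : e0 <= rho/2) by apply Rmin_r.
pose proof (is_derive_RInt_param_bound_comp g (fun _ => de) (fun z => z) x 0 1) as HD.
simpl in HD.
assert (Hval : RInt (fun t => Derive (fun u0 => g u0 t) x) de x = FFx x x - FFx x de).
{ rewrite (RInt_ext _ (Fr alpha u ut ur urr utr x)).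
  - apply is_RInt_unique.
    apply (is_RInt_derive (V:=R_CompleteNormedModule) (fun v => FFx x v)).
    + intros v Hv. rewrite Rmin_left, Rmax_right in Hv by lra.
      apply (DF alpha U u ut ur utt urr urt utr); auto. apply HO; unfold Omega; lra. lra.
    + intros v Hv. rewrite Rmin_left, Rmax_right in Hv by lra.
      apply cont_pt_c. apply cont2_sec2_c.
      apply (CFr alpha U u ut ur utt urr urt utr); auto. apply HO; unfold Omega; lra. lra.
  - intros v Hv. rewrite Rmin_left, Rmax_right in Hv by lra.
    assert (Ho : Omega T0 x v) by (unfold Omega; lra).
    rewrite <- (ident_U alpha U u ut ur utt urr urt utr HG T0 x v); auto. 2: lra.
    apply is_derive_unique. apply (Dg alpha U u ut ur utt urr urt utr); auto. lra. }
assert (HD' : is_derive (fun z => RInt (fun v => g z v) de z) x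
   (RInt (fun t => Derive (fun u0 => g u0 t) x) de x + - g x de * 0 + g x x * 1)).
{ apply HD.
  - apply loc_of. exists eta. split; auto. intros y Hy. apply exR; auto; lra.
  - exists (mkposreal e0 He0). apply loc_of. exists eta. split; auto. intros y Hy. simpl.
    apply exR; auto; lra.
  - exists (mkposreal e0 He0). apply loc_of. exists eta. split; auto. intros y Hy. simpl.
    apply exR; auto; lra.
  - apply (is_derive_const (K:=R_AbsRing) (V:=R_NormedModule)).
  - apply (is_derive_id (K:=R_AbsRing)).
  - exists (mkposreal e0 He0). apply loc_of. exists eta. split; auto. intros y Hy t Ht. simpl in Ht.
    rewrite Rmin_left, Rmax_right in Ht by lra.
    destruct (Hreg y t Hy) as [Hyt Ht0]. lra.
    eexists. apply (Dg alpha U u ut ur utt urr urt utr); auto.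
  - intros t Ht. rewrite Rmin_left, Rmax_right in Ht by lra.
    apply (CDg alpha U u ut ur utt urr urt utr); auto. apply HO; unfold Omega; lra. lra.
  - apply (LCDg alpha U u ut ur utt urr urt utr); auto. apply HO; unfold Omega; lra. lra.
  - apply (LCDg alpha U u ut ur utt urr urt utr); auto. lra.
  - apply (Cg_r alpha U u ut ur utt urr urt utr); auto. apply HO; unfold Omega; lra. lra.
  - apply (Cg_r alpha U u ut ur utt urr urt utr); auto. lra. }
replace (g x x + FFx x x - FFx x de) with
  (RInt (fun t => Derive (fun u0 => g u0 t) x) de x + - g x de * 0 + g x x * 1).
exact HD'. rewrite Hval. ring.
Qed.
End S3.

Lemma small_lim a B T1 : 0 < T1 -> 0 <= B -> (forall de, 0 < de < T1 -> - de * B <= a) -> 0 <= a.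
Proof.
intros HT HB H. apply Rnot_lt_le. intros Ha.
set (de := Rmin (T1/2) (- a / (2 * (B + 1)))).
assert (Hd1 : de <= T1/2) by apply Rmin_l.
assert (Hd2 : de <= - a / (2 * (B + 1))) by apply Rmin_r.
assert (Hd0 : 0 < de) by (apply Rmin_pos; [lra| apply Rdiv_lt_0_compat; lra]).
specialize (H de ltac:(lra)).
assert (de * (2 * (B + 1)) <= - a).
{ apply Rle_trans with (- a / (2 * (B + 1)) * (2 * (B + 1))). apply Rmult_le_compat_r; lra.
  right. field. lra. }
nra.
Qed.

Section S4.
Variables (alpha T0 : R) (U : R -> R -> Prop) (u ut ur utt urr urt utr : R -> R -> R).
Hypothesis Halpha : 0 < alpha.
Hypothesis HU : open2 U.
Hypothesis HG : Good U u ut ur utt urr urt utr.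
Hypothesis HO : forall t r, Omega T0 t r -> U t r.
Hypothesis Heq : forall t r, Omega T0 t r -> 0 < r ->
           skyrme_eq alpha r (u t r) (ut t r) (ur t r) (utt t r) (urr t r).
Hypothesis Hbc : forall t, 0 < t <= T0 -> u t 0 = 0.

Let g := gg alpha u ut ur.
Let FFx := FF alpha u ut ur.
Definition E0 T := RInt (fun v => g T v) 0 T.
Definition Ed de T := RInt (fun v => g T v) de T.

Lemma unif_bound T1 T2 : 0 < T1 <= T2 -> T2 <= T0 ->
  exists C, 0 <= C /\ forall t v, T1 <= t <= T2 -> 0 < v <= T1 ->
    Rabs (g t v) <= C * v /\ Rabs (FFx t v) <= C * v.
Proof.
intros HT HT2.
assert (HOm : forall t r, T1 <= t <= T2 -> 0 <= r <= T1 -> U t r).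
{ intros t r Ht Hr. apply HO. unfold Omega; lra. }
destruct (rect_bound ur T1 T2 0 T1) as [M1 HM1]; try lra.
{ intros x y Hx Hy. apply (HG x y (HOm x y Hx Hy)). }
destruct (rect_bound ut T1 T2 0 T1) as [M2 HM2]; try lra.
{ intros x y Hx Hy. apply (HG x y (HOm x y Hx Hy)). }
set (K := Rabs M1 + Rabs M2).
assert (HK : 0 <= K) by (unfold K; pose proof (Rabs_pos M1); pose proof (Rabs_pos M2); lra).
exists (Cst alpha K). split.
{ unfold Cst. pose proof (pow2_ge_0 K). pose proof (pow2_ge_0 alpha). pose proof (pow2_ge_0 (alpha*K)). nra. }
intros t v Ht Hv.
cut (Rabs (g t v) <= Cst alpha K * Rabs v /\ Rabs (FFx t v) <= Cst alpha K * Rabs v).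
{ rewrite (Rabs_pos_eq v) by lra. auto. }
apply (gF_bound alpha U u ut ur utt urr urt utr); auto.
- intros s Hs. rewrite Rmin_left, Rmax_right in Hs by lra. split. apply HOm; lra.
  pose proof (HM1 t s Ht ltac:(lra)). pose proof (Rle_abs M1). pose proof (Rabs_pos M2). unfold K. lra.
- pose proof (HM2 t v Ht ltac:(lra)). pose proof (Rle_abs M2). pose proof (Rabs_pos M1). unfold K. lra.
- apply Hbc. lra.
- lra.
Qed.

Lemma split_E de T : 0 < de < T -> T <= T0 -> E0 T = RInt (fun v => g T v) 0 de + Ed de T.
Proof.
intros Hd HT. unfold E0, Ed.
pose proof (int_g alpha U u ut ur utt urr urt utr HU HG T T0 ltac:(lra) HO (Hbc T ltac:(lra))) as Hi.
symmetry. apply (RInt_Chasles (V:=R_CompleteNormedModule)).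
apply (ex_RInt_Chasles_1 (V:=R_CompleteNormedModule)) with T; auto; lra.
apply (ex_RInt_Chasles_2 (V:=R_CompleteNormedModule)) with 0; auto; lra.
Qed.

Lemma small_part C T1 T2 t de : 0 < T1 <= T2 -> T2 <= T0 -> 0 <= C ->
  (forall t v, T1 <= t <= T2 -> 0 < v <= T1 -> Rabs (g t v) <= C * v /\ Rabs (FFx t v) <= C * v) ->
  T1 <= t <= T2 -> 0 < de < T1 ->
  Rabs (RInt (fun v => g t v) 0 de) <= de * (C * de).
Proof.
intros HT HT2 HC HB Ht Hd.
replace (de * (C * de)) with ((de - 0) * (C * de)) by ring.
apply abs_RInt_le_const. lra.
pose proof (int_g alpha U u ut ur utt urr urt utr HU HG t T0 ltac:(lra) HO (Hbc t ltac:(lra))) as Hi.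
apply (ex_RInt_Chasles_1 (V:=R_CompleteNormedModule)) with t; auto; lra.
intros v Hv. destruct (Req_dec v 0) as [->|Hv0].
- replace (g t 0) with 0 by (unfold g, gg, gfun; ring). rewrite Rabs_R0. nra.
- apply Rle_trans with (C * v). apply (HB t v); auto. lra. nra.
Qed.

Lemma deriv_Ed' de x : 0 < de < x -> x <= T0 ->
  is_derive (Ed de) x (g x x + FFx x x - FFx x de).
Proof.
intros. unfold Ed. apply (deriv_Ed alpha T0 U u ut ur utt urr urt utr); auto.
Qed.

Lemma E0_mono T1 T2 : 0 < T1 < T2 -> T2 <= T0 -> E0 T1 <= E0 T2.
Proof.
intros HT HT2.
destruct (unif_bound T1 T2 ltac:(lra) HT2) as [C [HC HB]].
assert (Hmain : forall de, 0 < de < T1 -> - de * (C * (2 * T1 + T2)) <= E0 T2 - E0 T1).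
{ intros de Hd.
  rewrite (split_E de T2), (split_E de T1) by lra.
  pose proof (small_part C T1 T2 T1 de ltac:(lra) HT2 HC HB ltac:(lra) Hd) as S1.
  pose proof (small_part C T1 T2 T2 de ltac:(lra) HT2 HC HB ltac:(lra) Hd) as S2.
  assert (Hlin : forall z : R, is_derive (fun z => C * de * z) z (C * de)).
  { intro z. auto_derive. auto. ring. }
  destruct (MVT_gen (fun z => Ed de z + C * de * z) T1 T2
     (fun z => g z z + FFx z z - FFx z de + C * de)) as [c [Hc Hm]].
  - intros z Hz. rewrite Rmin_left, Rmax_right in Hz by lra.
    apply (is_derive_plus (K:=R_AbsRing) (V:=R_NormedModule)).
    apply deriv_Ed'; lra.
    apply Hlin.
  - intros z Hz. rewrite Rmin_left, Rmax_right in Hz by lra.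
    apply derivable_continuous_pt. exists (g z z + FFx z z - FFx z de + C * de).
    apply is_derive_Reals.
    apply (is_derive_plus (K:=R_AbsRing) (V:=R_NormedModule)).
    apply deriv_Ed'; lra.
    apply Hlin.
  - rewrite Rmin_left, Rmax_right in Hc by lra.
    assert (Hp : 0 <= g c c + FFx c c) by (apply flux_nonneg; lra).
    assert (Hf : Rabs (FFx c de) <= C * de) by (apply (HB c de); lra).
    assert (Hder : 0 <= g c c + FFx c c - FFx c de + C * de)
      by (pose proof (Rle_abs (FFx c de)); lra).
    assert (0 <= (g c c + FFx c c - FFx c de + C * de) * (T2 - T1)) by (apply Rmult_le_pos; lra).
    pose proof (Rle_abs (RInt (fun v => g T1 v) 0 de)).
    pose proof (Rle_abs (- RInt (fun v => g T2 v) 0 de)). rewrite Rabs_Ropp in *.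
    assert (de * (C * de) <= de * (C * T1)) by (apply Rmult_le_compat_l; [lra|apply Rmult_le_compat_l; lra]).
    assert (de * (C * (T2 - T1)) <= de * (C * T2)) by (apply Rmult_le_compat_l; [lra|apply Rmult_le_compat_l; lra]).
    simpl in Hm. nra. }
assert (0 <= E0 T2 - E0 T1).
{ apply (small_lim _ (C * (2 * T1 + T2)) T1); try lra. apply Rmult_le_pos; lra.
  intros de Hd. specialize (Hmain de Hd). lra. }
lra.
Qed.

End S4.

Section S5.
Variables (alpha T0 : R) (U : R -> R -> Prop) (u ut ur utt urr urt utr : R -> R -> R).
Hypothesis Halpha : 0 < alpha.
Hypothesis HU : open2 U.
Hypothesis HG : Good U u ut ur utt urr urt utr.
Hypothesis HO : forall t r, Omega T0 t r -> U t r.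
Hypothesis Heq : forall t r, Omega T0 t r -> 0 < r ->
           skyrme_eq alpha r (u t r) (ut t r) (ur t r) (utt t r) (urr t r).
Hypothesis Hbc : forall t, 0 < t <= T0 -> u t 0 = 0.

Let g := gg alpha u ut ur.
Let E0' := E0 alpha u ut ur.

Lemma E0_cont x : 0 < x <= T0 -> forall eps, 0 < eps -> exists d, 0 < d /\
  forall t, Rabs (t - x) < d -> x/2 <= t <= T0 -> Rabs (E0' t - E0' x) < eps.
Proof.
intros Hx eps Heps.
set (T1 := x/2).
destruct (unif_bound alpha T0 U u ut ur utt urr urt utr HG HO Hbc T1 T0 ltac:(unfold T1; lra) ltac:(lra))
  as [C [HC HB]].
set (de := Rmin (T1/2) (Rmin 1 (eps / (8 * (C + 1))))).
assert (Hd1 : de <= T1/2) by apply Rmin_l.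
assert (Hd2 : de <= 1) by (eapply Rle_trans; [apply Rmin_r|apply Rmin_l]).
assert (Hd3 : de <= eps / (8 * (C + 1))) by (eapply Rle_trans; [apply Rmin_r|apply Rmin_r]).
assert (Hd0 : 0 < de).
{ unfold de. repeat apply Rmin_pos; try (unfold T1; lra). apply Rdiv_lt_0_compat; lra. }
assert (Hsm : forall t, T1 <= t <= T0 -> Rabs (RInt (fun v => g t v) 0 de) <= eps / 8).
{ intros t Ht. eapply Rle_trans.
  apply (small_part alpha T0 U u ut ur utt urr urt utr HU HG HO Hbc C T1 T0 t de); auto; unfold T1 in *; lra.
  assert (de * (C * de) <= C * de) by (apply Rle_trans with (1 * (C * de)); [apply Rmult_le_compat_r; nra|lra]).
  assert (C * de <= eps / 8).
  { apply Rle_trans with (C * (eps / (8 * (C + 1)))). apply Rmult_le_compat_l; lra.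
    apply Rle_trans with ((C + 1) * (eps / (8 * (C + 1)))).
    assert (0 <= eps / (8 * (C + 1))) by (apply Rlt_le, Rdiv_lt_0_compat; lra). nra.
    right. field. lra. }
  lra. }
assert (Hcont : continuity_pt (Ed alpha u ut ur de) x).
{ apply derivable_continuous_pt. eexists. apply is_derive_Reals.
  apply (deriv_Ed' alpha T0 U u ut ur utt urr urt utr HU HG HO Heq); unfold T1 in *; lra. }
destruct (loc_to _ _ (proj1 (continuity_pt_locally _ _) Hcont (mkposreal (eps/2) ltac:(lra)))) as [d1 [Hd1' H1]].
exists d1. split; auto. intros t Ht Ht2.
simpl in H1. specialize (H1 t Ht).
unfold E0'. rewrite (split_E alpha T0 U u ut ur utt urr urt utr HU HG HO Hbc de t) by (unfold T1 in *; lra).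
rewrite (split_E alpha T0 U u ut ur utt urr urt utr HU HG HO Hbc de x) by (unfold T1 in *; lra).
pose proof (Hsm t ltac:(unfold T1 in *; lra)). pose proof (Hsm x ltac:(unfold T1 in *; lra)).
fold g.
set (a1 := RInt (fun v => g t v) 0 de) in *. set (a2 := RInt (fun v => g x v) 0 de) in *.
set (b1 := Ed alpha u ut ur de t) in *. set (b2 := Ed alpha u ut ur de x) in *.
replace (a1 + b1 - (a2 + b2)) with (a1 + (- a2) + (b1 - b2)) by ring.
eapply Rle_lt_trans. apply Rabs_triang.
eapply Rle_lt_trans. apply Rplus_le_compat_r. apply Rabs_triang. rewrite Rabs_Ropp. lra.
Qed.

Lemma E0_nonneg T : 0 < T <= T0 -> 0 <= E0' T.
Proof.
intros HT. unfold E0', E0. apply RInt_ge_0. lra.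
apply (int_g alpha U u ut ur utt urr urt utr HU HG T T0); auto.
intros v Hv. unfold gg, gfun. apply Rmult_le_pos. apply edens_nonneg. lra. lra.
Qed.

End S5.

Theorem mainTheorem8
  (alpha T0 : R) (Halpha : 0 < alpha) (HT0 : 0 < T0)
  (U : R -> R -> Prop) (u ut ur utt urr : R -> R -> R)
  (HUopen : open2 U)
  (HOmegaU : forall t r, Omega T0 t r -> U t r)
  (Hsmooth : smooth_on U u)
  (Hut : forall t r, U t r -> derivable_pt_lim (fun s => u s r) t (ut t r))
  (Hur : forall t r, U t r -> derivable_pt_lim (fun s => u t s) r (ur t r))
  (Hutt : forall t r, U t r -> derivable_pt_lim (fun s => ut s r) t (utt t r))
  (Hurr : forall t r, U t r -> derivable_pt_lim (fun s => ur t s) r (urr t r))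
  (Heq : forall t r, Omega T0 t r -> 0 < r ->
           skyrme_eq alpha r (u t r) (ut t r) (ur t r) (utt t r) (urr t r))
  (Hbc : forall t, 0 < t <= T0 -> u t 0 = 0) :
  exists (E G : R -> R) (L : R),
    (forall T, 0 < T <= T0 ->
       is_RInt (fun r => edens alpha (u T r) (ut T r) (ur T r) r * r) 0 T (E T)) /\
    (forall T, 0 < T <= T0 -> is_RInt E 0 T (G T)) /\
    lim_right0 T0 E L /\
    lim_right0 T0 (fun T => G T / T) L.
Proof.
destruct (good_of U u ut ur utt urr HUopen Hsmooth Hut Hur Hutt Hurr) as [urt [utr HG]].
set (E1 := E0 alpha u ut ur).
assert (Hint : forall T, 0 < T <= T0 -> ex_RInt (fun v => gg alpha u ut ur T v) 0 T).
{ intros T HT. apply (int_g alpha U u ut ur utt urr urt utr HUopen HG T T0); auto. }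
assert (Hmono : forall a b, 0 < a -> a <= b -> b <= T0 -> E1 a <= E1 b).
{ intros a b Ha Hab Hb. destruct (Req_dec a b) as [->|Hne]. lra.
  apply (E0_mono alpha T0 U u ut ur utt urr urt utr HUopen HG HOmegaU Heq Hbc); lra. }
assert (Hnn : forall T, 0 < T <= T0 -> 0 <= E1 T).
{ intros. apply (E0_nonneg alpha T0 U u ut ur utt urr urt utr HUopen HG HOmegaU Hbc); auto. }
set (A := fun y => exists t, 0 < t <= T0 /\ y = - E1 t).
destruct (completeness A) as [m Hm].
{ exists 0. intros y [t [Ht ->]]. specialize (Hnn t Ht). lra. }
{ exists (- E1 T0). exists T0. split; auto. lra. }
set (L := - m).
assert (HL1 : forall t, 0 < t <= T0 -> L <= E1 t).
{ intros t Ht. assert (- E1 t <= m) by (apply (proj1 Hm); exists t; auto). unfold L; lra. }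
assert (HL2 : forall eps, 0 < eps -> exists t, 0 < t <= T0 /\ E1 t < L + eps).
{ intros eps Heps. apply NNPP. intro Hn.
  assert (m <= m - eps).
  { apply (proj2 Hm). intros y [t [Ht ->]]. apply Rnot_lt_le. intro Hc. apply Hn. exists t.
    split; auto. unfold L; lra. }
  lra. }
set (Ew := fun T => if Rle_dec T 0 then L else if Rle_dec T T0 then E1 T else E1 T0).
assert (HEw : forall T, 0 < T <= T0 -> Ew T = E1 T).
{ intros T HT. unfold Ew. destruct (Rle_dec T 0); [lra|]. destruct (Rle_dec T T0); [auto|lra]. }
assert (Hcont : forall s, 0 <= s <= T0 -> continuity_pt Ew s).
{ intros s Hs. apply continuity_pt_locally. intros eps. apply loc_of.
  pose proof (cond_pos eps) as Heps.
  destruct (Req_dec s 0) as [->|Hs0].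
  - destruct (HL2 eps Heps) as [ts [Hts Hts2]]. exists ts. split. lra.
    intros v Hv. rewrite Rminus_0_r in Hv.
    assert (Ew 0 = L) by (unfold Ew; destruct (Rle_dec 0 0); lra). rewrite H.
    unfold Ew. destruct (Rle_dec v 0). rewrite Rminus_diag, Rabs_R0. lra.
    destruct (Rle_dec v T0).
    + assert (v < ts) by (apply Rabs_def2 in Hv; lra).
      pose proof (HL1 v ltac:(lra)). pose proof (Hmono v ts ltac:(lra) ltac:(lra) ltac:(lra)).
      rewrite Rabs_pos_eq; lra.
    + apply Rabs_def2 in Hv. lra.
  - destruct (E0_cont alpha T0 U u ut ur utt urr urt utr HUopen HG HOmegaU Heq Hbc s ltac:(lra) eps Heps)
      as [d [Hd Hd']].
    exists (Rmin d (s/2)). split. apply Rmin_pos; lra.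
    intros v Hv. pose proof (Rmin_l d (s/2)). pose proof (Rmin_r d (s/2)).
    rewrite (HEw s) by lra. apply Rabs_def2 in Hv.
    unfold Ew. destruct (Rle_dec v 0). lra.
    destruct (Rle_dec v T0).
    + apply Hd'. apply Rabs_def1; lra. lra.
    + apply Hd'. apply Rabs_def1; lra. lra. }
assert (HRi : forall T, 0 < T <= T0 -> Riemann_integrable Ew 0 T).
{ intros T HT. apply continuity_implies_RiemannInt. lra. intros x Hx. apply Hcont. lra. }
exists Ew, (fun T => RInt Ew 0 T), L.
split; [|split; [|split]].
- intros T HT. rewrite HEw by auto.
  exists (ex_RInt_Reals_0 _ _ _ (Hint T HT)).
  rewrite <- RInt_Reals. reflexivity.
- intros T HT. exists (HRi T HT). rewrite <- RInt_Reals. reflexivity.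
- intros eps Heps. destruct (HL2 eps Heps) as [ts [Hts Hts2]]. exists ts. split. lra.
  intros T HT HTd HT0'. rewrite HEw by lra.
  pose proof (HL1 T ltac:(lra)). pose proof (Hmono T ts ltac:(lra) ltac:(lra) ltac:(lra)).
  rewrite Rabs_pos_eq; lra.
- intros eps Heps. destruct (HL2 eps Heps) as [ts [Hts Hts2]]. exists ts. split. lra.
  intros T HT HTd HT0'.
  rewrite (RInt_Reals _ _ _ (HRi T ltac:(lra))).
  pose proof (RiemannInt_const_bound (l:=L) (u:=E1 T) (HRi T ltac:(lra)) ltac:(lra)) as Hb.
  destruct Hb as [Hb1 Hb2].
  { intros x Hx. rewrite HEw by lra. split. apply HL1; lra. apply Hmono; lra. }
  pose proof (Hmono T ts ltac:(lra) ltac:(lra) ltac:(lra)).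
  set (I0 := RiemannInt (HRi T ltac:(lra))) in *.
  assert (L <= I0 / T <= E1 T).
  { split.
    - apply (Rmult_le_reg_r T). lra. unfold Rdiv. rewrite Rmult_assoc, Rinv_l by lra. lra.
    - apply (Rmult_le_reg_r T). lra. unfold Rdiv. rewrite Rmult_assoc, Rinv_l by lra. lra. }
  rewrite Rabs_pos_eq; lra.
Qed.
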